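(* For every $d\ge 2$, $\mu(\mathit{BF}(d))=2^{d+1}-2$.
   Context: Binary strings $c=c_0\cdots c_{d-1}$ have positions $0,\dots,d-1$ from the left; $c(i)$ is $c$ with bit $i$ complemented. $\mathit{BF}(d)$ has vertex set $\{[\ell,c]:\ell\in\{0,\dots,d\},\ c\in\{0,1\}^d\}$; for $\ell\in\{0,\dots,d-1\}$, $[\ell,c]$ is adjacent to $[\ell+1,c']$ iff $c'=c$ or $c'=c(\ell)$, and there are no other edges. For a connected graph $G$ and $X\subseteq V(G)$, two vertices $x,y$ are $X$-visible if some shortest $x,y$-path has no internal vertex in $X$; $X$ is a mutual-visibility set if every two vertices of $X$ are $X$-visible; $\mu(G)$ is the maximum size of a mutual-visibility set. *)

(* Defs.v *)
From mathcomp Require Import all_boot.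
Set Implicit Arguments. Unset Strict Implicit. Unset Printing Implicit Defensive.

Section Visibility.
Variable T : finType.
Variable e : rel T.

(* p = [v1; ...; vk] is a walk from x to y: x - v1 - ... - vk = y ; length = size p *)
Definition walk (x y : T) (p : seq T) : bool := path e x p && (last x p == y).

Definition shortest (x y : T) (p : seq T) : Prop :=
  walk x y p /\ forall q, walk x y q -> size p <= size q.

(* internal vertices of the walk x :: p : all of them except x and last x p *)
Definition internal (x : T) (p : seq T) : seq T := behead (belast x p).

Definition Xvisible (X : {set T}) (x y : T) : Prop :=
  exists p, shortest x y p /\ all (fun v => v \notin X) (internal x p).

Definition mutual_visibility_set (X : {set T}) : Prop :=
  forall x y, x \in X -> y \in X -> x != y -> Xvisible X x y.

Definition is_mu (k : nat) : Prop :=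
  (exists X : {set T}, mutual_visibility_set X /\ #|X| = k) /\
  (forall X : {set T}, mutual_visibility_set X -> #|X| <= k).
End Visibility.

(* Butterfly graph BF(d): vertices [l, c], l in {0..d}, c in {0,1}^d *)
Definition bf_vertex (d : nat) : finType := ('I_d.+1 * {ffun 'I_d -> bool})%type.

Definition flipb (d : nat) (c : {ffun 'I_d -> bool}) (i : 'I_d) : {ffun 'I_d -> bool} :=
  [ffun j => if j == i then ~~ c j else c j].

(* [l,c] -> [l+1,c'] with c' = c or c' = c(l) *)
Definition bf_arc (d : nat) (u v : bf_vertex d) : bool :=
  (val v.1 == (val u.1).+1) &&
  [exists i : 'I_d, (val i == val u.1) && ((v.2 == u.2) || (v.2 == flipb u.2 i))].

Definition bf_adj (d : nat) : rel (bf_vertex d) := fun u v => bf_arc u v || bf_arc v u.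
Arguments bf_adj d : clear implicits.

(* Main.v *)
Require Import Defs.
From mathcomp Require Import all_boot.
From mathcomp Require Import zify.
Set Implicit Arguments. Unset Strict Implicit. Unset Printing Implicit Defensive.

Section General.
Variable T : finType.
Variable e : rel T.

Lemma walk_nil x y : walk e x y [::] = (x == y).
Proof. by rewrite /walk /=. Qed.

Lemma walk_cons x y z p : walk e x y (z :: p) = e x z && walk e z y p.
Proof. by rewrite /walk /= andbA. Qed.

Lemma walk_cat x y p1 p2 :
  walk e x y (p1 ++ p2) = walk e x (last x p1) p1 && walk e (last x p1) y p2.
Proof. by rewrite /walk cat_path last_cat eqxx andbT andbA. Qed.

Lemma walk_last x y p : walk e x y p -> last x p = y.
Proof. by case/andP=> _ /eqP. Qed.

Lemma internal_mem x y p w : walk e x y p -> w \in x :: p -> w != x -> w != y ->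
  w \in internal x p.
Proof.
move=> /walk_last; case/lastP: p => [|q z] /=.
  by move=> _; rewrite inE => /eqP ->; rewrite eqxx.
rewrite last_rcons => <-; rewrite /internal belast_rcons /=.
rewrite inE mem_rcons inE => /orP[/eqP->|/orP[/eqP->|//]]; by rewrite eqxx.
Qed.

Lemma not_visible (X : {set T}) x y q :
  walk e x y q ->
  (forall p, walk e x y p -> size p <= size q ->
     exists2 w, w \in x :: p & [/\ w \in X, w != x & w != y]) ->
  ~ Xvisible e X x y.
Proof.
move=> wq H [p [[wp minp] allp]].
have [w wp' [wX wx wy]] := H p wp (minp q wq).
have := internal_mem wp wp' wx wy.
by move/(allP allp); rewrite wX.
Qed.

End General.
Section BF.
Variable d : nat.
Local Notation V := (bf_vertex d).
Local Notation B := {ffun 'I_d -> bool}.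
Local Notation adj := (bf_adj d).

Definition lev (v : V) : nat := nat_of_ord v.1.
Definition flipn (c : B) (k : nat) : B := [ffun j : 'I_d => if nat_of_ord j == k then ~~ c j else c j].
Definition mixf (t b : B) (k : nat) : B := [ffun j : 'I_d => if nat_of_ord j < k then t j else b j].
Definition mkv (k : nat) (c : B) : V := (inord k, c).

Lemma lev_le (v : V) : lev v <= d.
Proof. by rewrite /lev -ltnS ltn_ord. Qed.

Lemma lev_mkv k c : k <= d -> lev (mkv k c) = k.
Proof. by move=> kd; rewrite /lev /mkv /= inordK. Qed.

Lemma vertex_eq (u v : V) : lev u = lev v -> u.2 = v.2 -> u = v.
Proof. by case: u v => [a b] [a2 b2]; rewrite /lev /= => /val_inj -> ->. Qed.

Lemma flipnE c k j : flipn c k j = if nat_of_ord j == k then ~~ c j else c j.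
Proof. by rewrite ffunE. Qed.

Lemma mixfE t b k j : mixf t b k j = if nat_of_ord j < k then t j else b j.
Proof. by rewrite ffunE. Qed.

Lemma bf_arcE (u v : V) : bf_arc u v =
  (lev v == (lev u).+1) && ((v.2 == u.2) || (v.2 == flipn u.2 (lev u))).
Proof.
rewrite /bf_arc /lev; case: (boolP (val v.1 == (val u.1).+1)) => //= H.
have ud : val u.1 < d by have := ltn_ord v.1; rewrite (eqP H) ltnS.
apply/existsP/idP.
  case=> i /andP[/eqP iu /orP[->//|/eqP ->]]; apply/orP; right; apply/eqP.
  by apply/ffunP=> j; rewrite !ffunE -iu.
move=> H2; exists (Ordinal ud); rewrite /= eqxx /=.
case/orP: H2 => [->//|/eqP ->]; apply/orP; right; apply/eqP.
by apply/ffunP=> j; rewrite !ffunE.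
Qed.

Lemma adjE (u v : V) : adj u v =
  ((lev v == (lev u).+1) && ((v.2 == u.2) || (v.2 == flipn u.2 (lev u)))) ||
  ((lev u == (lev v).+1) && ((u.2 == v.2) || (u.2 == flipn v.2 (lev v)))).
Proof. by rewrite /bf_adj !bf_arcE. Qed.

Lemma adj_sym : symmetric adj.
Proof. by move=> u v; rewrite /bf_adj orbC. Qed.

Lemma adj_lev (u v : V) : adj u v -> lev v = (lev u).+1 \/ lev u = (lev v).+1.
Proof. by rewrite adjE => /orP[/andP[/eqP -> _]|/andP[/eqP -> _]]; [left|right]. Qed.

Lemma adj_bits (u v : V) (m : 'I_d) : adj u v ->
  nat_of_ord m != minn (lev u) (lev v) -> u.2 m = v.2 m.
Proof.
rewrite adjE => /orP[/andP[/eqP lv /orP[/eqP->//|/eqP->]]|/andP[/eqP lu /orP[/eqP->//|/eqP->]]].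
  by rewrite lv (minn_idPl (leqnSn _)) flipnE => /negbTE ->.
by rewrite lu (minn_idPr (leqnSn _)) flipnE => /negbTE ->.
Qed.

Lemma adj_up (u v : V) : adj u v -> lev v = (lev u).+1 ->
  v.2 = u.2 \/ v.2 = flipn u.2 (lev u).
Proof.
rewrite adjE => /orP[/andP[_ /orP[/eqP->|/eqP->]]|/andP[/eqP lu _]]; try by [left|right].
move=> lv; exfalso; lia.
Qed.


Lemma sizeS (A : Type) (z : A) p : size (z :: p) = (size p).+1.
Proof. by []. Qed.

Lemma adj_same (u v : V) (j : 'I_d) : adj u v -> nat_of_ord j != lev u -> nat_of_ord j != lev v -> u.2 j = v.2 j.
Proof.
move=> a h1 h2; apply: adj_bits a _; apply/eqP => E.
by move/eqP: h1; move/eqP: h2; lia.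
Qed.

Lemma walk_lb x y p : walk adj x y p -> lev y <= lev x + size p /\ lev x <= lev y + size p.
Proof.
elim: p x => [|z p IH] x; rewrite ?sizeS; first by rewrite walk_nil => /eqP ->; lia.
rewrite walk_cons => /andP[a w]; have [H1 H2] := IH _ w.
by case: (adj_lev a) => E; lia.
Qed.

Lemma walk_ivt x y p k : walk adj x y p ->
  (lev x <= k <= lev y) || (lev y <= k <= lev x) -> exists2 w, w \in x :: p & lev w = k.
Proof.
elim: p x => [|z p IH] x; rewrite ?sizeS.
  rewrite walk_nil => /eqP -> h; exists y; rewrite ?mem_head //; lia.
rewrite walk_cons => /andP[a w] h.
case: (eqVneq (lev x) k) => [<-|ne]; first by exists x; rewrite // mem_head.
have [w' w'in lw] : exists2 w, w \in z :: p & lev w = k.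
  by apply: IH w _; case: (adj_lev a) => E; apply/orP; lia.
by exists w'; rewrite // inE w'in orbT.
Qed.

Lemma walk_bit x y p (m : 'I_d) : walk adj x y p -> x.2 m != y.2 m ->
  (exists2 w, w \in x :: p & lev w = m) /\ (exists2 w, w \in x :: p & lev w = m.+1).
Proof.
elim: p x => [|z p IH] x; rewrite ?sizeS; first by rewrite walk_nil => /eqP ->; rewrite eqxx.
rewrite walk_cons => /andP[a w] h.
case: (eqVneq (nat_of_ord m) (minn (lev x) (lev z))) => E.
  case: (adj_lev a) => L.
    have Hx : lev x = m by move: E; rewrite L (minn_idPl (leqnSn _)).
    split; [exists x; rewrite ?inE ?eqxx //|exists z; rewrite ?inE ?eqxx ?orbT //]; lia.
  have Hz : lev z = m by move: E; rewrite L (minn_idPr (leqnSn _)).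
  split; [exists z; rewrite ?inE ?eqxx ?orbT //|exists x; rewrite ?inE ?eqxx //]; lia.
have := adj_bits a E => xz; rewrite xz in h.
have [[w1 i1 l1] [w2 i2 l2]] := IH _ w h.
by split; [exists w1|exists w2]; rewrite // inE ?i1 ?i2 orbT.
Qed.

Lemma mixf_same c k : mixf c c k = c.
Proof. by apply/ffunP=> j; rewrite mixfE; case: ifP. Qed.

Lemma walk_tight_up x y p : walk adj x y p -> lev x + size p = lev y ->
 [/\ (forall m : 'I_d, nat_of_ord m < lev x -> x.2 m = y.2 m),
     (forall m : 'I_d, lev y <= nat_of_ord m -> x.2 m = y.2 m) &
     forall w, w \in x :: p -> lev x <= lev w <= lev y /\ w.2 = mixf y.2 x.2 (lev w)].
Proof.
elim: p x => [|z p IH] x; rewrite ?sizeS.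
  rewrite walk_nil addn0 => /eqP -> _; split=> // w; rewrite inE => /eqP ->.
  by rewrite mixf_same leqnn.
rewrite walk_cons => /andP[a w] hs.
have [lb1 lb2] := walk_lb w.
have lz : lev z = (lev x).+1 by case: (adj_lev a) => E; lia.
have [I1 I2 I3] := IH _ w ltac:(lia).
have xz : forall j : 'I_d, nat_of_ord j != lev x -> x.2 j = z.2 j.
  by move=> j hj; apply: adj_bits a _; rewrite lz; apply/eqP => E; move/eqP: hj; lia.
have B1 : forall m : 'I_d, nat_of_ord m < lev x -> x.2 m = y.2 m.
  by move=> m hm; rewrite xz ?I1 //; [lia|apply/eqP; lia].
have B2 : forall m : 'I_d, lev y <= nat_of_ord m -> x.2 m = y.2 m.
  by move=> m hm; rewrite xz ?I2 //; apply/eqP; lia.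
split=> // v; rewrite inE => /orP[/eqP ->|vin].
  split; first lia.
  by apply/ffunP=> j; rewrite mixfE; case: ifP => // /B1 ->.
have [L3 E3] := I3 v vin; split; first lia.
apply/ffunP=> j; rewrite E3 !mixfE; case: ifP => // hj.
move/negbT: hj; rewrite -leqNgt => hj.
by rewrite xz //; apply/eqP => E; lia.
Qed.

Lemma walk_tight_down x y p : walk adj x y p -> lev y + size p = lev x ->
 [/\ (forall m : 'I_d, nat_of_ord m < lev y -> x.2 m = y.2 m),
     (forall m : 'I_d, lev x <= nat_of_ord m -> x.2 m = y.2 m) &
     forall w, w \in x :: p -> lev y <= lev w <= lev x /\ w.2 = mixf x.2 y.2 (lev w)].
Proof.
elim: p x => [|z p IH] x; rewrite ?sizeS.
  rewrite walk_nil addn0 => /eqP -> _; split=> // w; rewrite inE => /eqP ->.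
  by rewrite mixf_same leqnn.
rewrite walk_cons => /andP[a w] hs.
have [lb1 lb2] := walk_lb w.
have lz : lev x = (lev z).+1 by case: (adj_lev a) => E; lia.
have [I1 I2 I3] := IH _ w ltac:(lia).
have xz : forall j : 'I_d, nat_of_ord j != lev z -> x.2 j = z.2 j.
  by move=> j hj; apply: adj_bits a _; rewrite lz; apply/eqP => E; move/eqP: hj; lia.
have B1 : forall m : 'I_d, nat_of_ord m < lev y -> x.2 m = y.2 m.
  by move=> m hm; rewrite xz ?I1 //; apply/eqP; lia.
have B2 : forall m : 'I_d, lev x <= nat_of_ord m -> x.2 m = y.2 m.
  by move=> m hm; rewrite xz ?I2 //; [lia|apply/eqP; lia].
split=> // v; rewrite inE => /orP[/eqP ->|vin].
  split; first lia.
  by apply/ffunP=> j; rewrite mixfE; case: ifP => // /negbT; rewrite -leqNgt => /B2 ->.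
have [L3 E3] := I3 v vin; split; first lia.
apply/ffunP=> j; rewrite E3 !mixfE; case: ifP => // hj.
by rewrite xz //; apply/eqP => E; lia.
Qed.


Lemma walk_via x y p w : walk adj x y p -> w \in x :: p ->
  lev w + lev w <= lev x + lev y + size p /\ lev x + lev y <= lev w + lev w + size p.
Proof.
elim: p x => [|z p IH] x; rewrite ?sizeS.
  by rewrite walk_nil => /eqP -> ; rewrite inE => /eqP ->; lia.
rewrite walk_cons => /andP[a wk]; rewrite inE => /orP[/eqP ->|win].
  by have [h1 h2] := walk_lb wk; case: (adj_lev a) => E; lia.
by have [h1 h2] := IH _ wk win; case: (adj_lev a) => E; lia.
Qed.

Lemma walk_split x y p w : walk adj x y p -> w \in x :: p ->
  exists p1 p2, [/\ p = p1 ++ p2, walk adj x w p1 & walk adj w y p2].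
Proof.
elim: p x => [|z p IH] x.
  rewrite walk_nil => /eqP -> ; rewrite inE => /eqP ->.
  by exists [::], [::]; rewrite !walk_nil eqxx.
rewrite walk_cons => /andP[a wk]; rewrite inE => /orP[/eqP ->|win].
  by exists [::], (z :: p); rewrite walk_nil walk_cons a wk eqxx.
have [p1 [p2 [E w1 w2]]] := IH _ wk win.
by exists (z :: p1), p2; rewrite E walk_cons a w1 w2.
Qed.

Definition fv (t b : B) (k : nat) : V := mkv k (mixf t b k).

Lemma lev_fv t b k : k <= d -> lev (fv t b k) = k.
Proof. exact: lev_mkv. Qed.

Lemma fv_adj t b k : k < d -> adj (fv t b k) (fv t b k.+1).
Proof.
move=> kd; rewrite adjE /fv !lev_mkv ?eqxx //=; last by lia.
set o := Ordinal kd.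
case: (eqVneq (t o) (b o)) => h; apply/orP; left; apply/orP; [left|right]; apply/eqP/ffunP => j;
  rewrite ?flipnE !mixfE /=.
  case: (ltnP j k) => h1; first by rewrite ltnS ltnW.
  case: (ltnP j k.+1) => h2 //.
  have -> : j = o by apply: val_inj => /=; lia.
  by [].
case: (ltnP j k) => h1.
  by rewrite ltnS ltnW // (_ : (nat_of_ord j == k) = false) //; apply/eqP; lia.
case: (ltnP j k.+1) => h2.
  have -> : j = o by apply: val_inj => /=; lia.
  by rewrite eqxx; move: h; case: (t o); case: (b o).
by rewrite (_ : (nat_of_ord j == k) = false) //; apply/eqP; lia.
Qed.

Lemma up_seg t b i n : i + n <= d ->
  path adj (fv t b i) (map (fv t b) (iota i.+1 n)) /\
  last (fv t b i) (map (fv t b) (iota i.+1 n)) = fv t b (i + n).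
Proof.
elim: n i => [|n IH] i h; first by rewrite addn0.
have [h1 h2] := IH i.+1 ltac:(lia).
rewrite /= h2 h1 fv_adj ?addSnnS //; lia.
Qed.

Lemma down_seg t b i n : i + n <= d ->
  path adj (fv t b (i + n)) (map (fv t b) (rev (iota i n))) /\
  last (fv t b (i + n)) (map (fv t b) (rev (iota i n))) = fv t b i.
Proof.
elim: n i => [|n IH] i h; first by rewrite addn0.
have [h1 h2] := IH i.+1 ltac:(lia).
rewrite -addSnnS /= rev_cons map_rcons rcons_path last_rcons h1 h2 /=.
by rewrite adj_sym fv_adj //; lia.
Qed.

Lemma mem_seg t b a n w : w \in map (fv t b) (iota a n) -> exists2 k, a <= k < a + n & w = fv t b k.
Proof. by case/mapP => k; rewrite mem_iota => h ->; exists k. Qed.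

Lemma mem_rseg t b a n w : w \in map (fv t b) (rev (iota a n)) -> exists2 k, a <= k < a + n & w = fv t b k.
Proof. by case/mapP => k; rewrite mem_rev mem_iota => h ->; exists k. Qed.

Lemma internal_rcons (x y : V) q : internal x (rcons q y) = q.
Proof. by rewrite /internal belast_rcons. Qed.

Lemma walk_rcons x y q : walk adj x y (rcons q y) = path adj x (rcons q y).
Proof. by rewrite /walk last_rcons eqxx andbT. Qed.

Lemma mkv_lev (u : V) : mkv (lev u) u.2 = u.
Proof. by case: u => a c; rewrite /mkv /lev /= inord_val. Qed.

Lemma fv_lo (t b : B) k (u : V) : lev u = k -> u.2 = b ->
  (forall j : 'I_d, j < k -> t j = b j) -> fv t b k = u.
Proof.
move=> lu bu h; rewrite -(mkv_lev u) /fv lu; congr mkv; apply/ffunP=> j.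
by rewrite mixfE bu; case: ifP => // /h.
Qed.

Lemma fv_hi (t b : B) k (u : V) : lev u = k -> u.2 = t ->
  (forall j : 'I_d, k <= j -> t j = b j) -> fv t b k = u.
Proof.
move=> lu bu h; rewrite -(mkv_lev u) /fv lu; congr mkv; apply/ffunP=> j.
by rewrite mixfE bu; case: ifP => // /negbT; rewrite -leqNgt => /h.
Qed.


Lemma exists_hi (c c' : B) : c != c' ->
  exists m : 'I_d, c m != c' m /\ forall j : 'I_d, m < j -> c j = c' j.
Proof.
move=> ne; case: (pickP (fun j => c j != c' j)) => [j0 h|none]; last first.
  by case/eqP: ne; apply/ffunP => j; have := none j => /= /negbFE /eqP.
case: (@arg_maxnP _ j0 (fun j => c j != c' j) (fun i : 'I_d => nat_of_ord i) h) => m Pm Hm.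
exists m; split=> // j mj; apply/eqP; apply: contraTT mj => /Hm; rewrite -leqNgt.
by [].
Qed.

Lemma exists_lo (c c' : B) : c != c' ->
  exists m : 'I_d, c m != c' m /\ forall j : 'I_d, j < m -> c j = c' j.
Proof.
move=> ne; case: (pickP (fun j => c j != c' j)) => [j0 h|none]; last first.
  by case/eqP: ne; apply/ffunP => j; have := none j => /= /negbFE /eqP.
case: (@arg_minnP _ j0 (fun j => c j != c' j) (fun i : 'I_d => nat_of_ord i) h) => m Pm Hm.
exists m; split=> // j mj; apply/eqP; apply: contraTT mj => /Hm; rewrite -leqNgt.
by [].
Qed.

Lemma vis_of (X : {set V}) x y q : path adj x (rcons q y) ->
  (forall r, walk adj x y r -> (size q).+1 <= size r) ->
  all (fun v => v \notin X) q -> Xvisible adj X x y.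
Proof.
move=> pq minq aq; exists (rcons q y); split; last by rewrite internal_rcons.
by split; [rewrite walk_rcons|move=> r /minq; rewrite size_rcons].
Qed.

Definition z0 : B := [ffun => false].
Definition v0 : V := mkv 0 z0.
Definition vd : V := mkv d z0.
Definition X0 : {set V} :=
  [set v | ((lev v == 0) && (v != v0)) || ((lev v == d) && (v != vd))].

Lemma notin_X0 v : 0 < lev v < d -> v \notin X0.
Proof. by rewrite inE => h; apply/negP => /orP[/andP[/eqP E _]|/andP[/eqP E _]]; lia. Qed.

Lemma lev_v0 : lev v0 = 0. Proof. exact: lev_mkv. Qed.
Lemma lev_vd : lev vd = d. Proof. exact: lev_mkv. Qed.

Lemma X0_mv : 0 < d -> mutual_visibility_set adj X0.
Proof.
move=> d0 x y; rewrite !inE => hx hy nxy.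
have lx := lev_le x; have ly := lev_le y.
have [x0|xd] : lev x = 0 \/ lev x = d by case/orP: hx => /andP[/eqP ->]; [left|right].
- have [y0|yd] : lev y = 0 \/ lev y = d by case/orP: hy => /andP[/eqP ->]; [left|right].
  +
    have cne : x.2 != y.2.
      by apply: contra nxy => /eqP E; apply/eqP/vertex_eq; rewrite ?x0 ?y0.
    have [m [hm1 hm2]] := exists_hi cne.
    have md : m < d := ltn_ord m.
    set w := mixf z0 x.2 m.+1.
    have E1 : mixf w x.2 m.+1 = mixf w y.2 m.+1.
      apply/ffunP=> j; rewrite !mixfE; case: (ltnP j m.+1) => hj //.
      by rewrite hm2.
    apply: (vis_of (q := map (fv w x.2) (iota 1 m.+1) ++ map (fv w y.2) (rev (iota 1 m)))).
    + have ex : fv w x.2 0 = x by apply: fv_lo.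
      have ey : fv w y.2 0 = y by apply: fv_lo.
      have [p1 l1] := up_seg w x.2 (i := 0) (n := m.+1) md.
      have [p2 l2] := down_seg w y.2 (i := 1) (n := m) ltac:(lia).
      rewrite ex in p1 l1; rewrite rcons_cat cat_path p1 l1 /= rcons_path.
      rewrite /fv E1 -/(fv w y.2 m.+1) -(add1n m) p2 l2 /= adj_sym.
      by have := fv_adj w y.2 d0; rewrite ey.
    + move=> r wr; have [_ [w' w'in lw']] := walk_bit wr hm1.
      have := walk_via wr w'in; rewrite size_cat !size_map size_rev !size_iota; lia.
    + apply/allP => v; rewrite mem_cat => /orP[/mem_seg [k hk ->]|/mem_rseg [k hk ->]].
        case: (ltnP k d) => kd; first by apply: notin_X0; rewrite lev_fv; lia.
        have kd' : k = d by lia.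
        have -> : fv w x.2 k = vd.
          rewrite /vd /fv kd'; congr mkv; apply/ffunP=> j; rewrite !mixfE ltn_ord.
          by rewrite (_ : j < m.+1) //; have := ltn_ord j; lia.
        have dn : (d == 0) = false by apply/eqP; lia.
        by rewrite inE lev_vd !eqxx /= dn.
      by apply: notin_X0; rewrite lev_fv; lia.
  +
    apply: (vis_of (q := map (fv y.2 x.2) (iota 1 d.-1))).
    + have ex : fv y.2 x.2 0 = x by apply: fv_lo.
      have ey : fv y.2 x.2 d = y by apply: fv_hi => // j; rewrite leqNgt ltn_ord.
      have [p1 l1] := up_seg y.2 x.2 (i := 0) (n := d.-1) ltac:(lia).
      rewrite ex in p1 l1; rewrite rcons_path p1 l1 /= add0n.
      by have h := fv_adj y.2 x.2 (k := d.-1) ltac:(lia); rewrite prednK // ey in h.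
    + by move=> r wr; have [h1 _] := walk_lb wr; rewrite size_map size_iota; lia.
    + by apply/allP => v /mem_seg [k hk ->]; apply: notin_X0; rewrite lev_fv; lia.
- have [y0|yd] : lev y = 0 \/ lev y = d by case/orP: hy => /andP[/eqP ->]; [left|right].
  +
    apply: (vis_of (q := map (fv x.2 y.2) (rev (iota 1 d.-1)))).
    + have ey : fv x.2 y.2 0 = y by apply: fv_lo.
      have ex : fv x.2 y.2 d = x by apply: fv_hi => // j; rewrite leqNgt ltn_ord.
      have [p1 l1] := down_seg x.2 y.2 (i := 1) (n := d.-1) ltac:(lia).
      rewrite (_ : 1 + d.-1 = d) in p1 l1; last by lia.
      rewrite ex in p1 l1; rewrite rcons_path p1 l1 /= adj_sym.
      by have := fv_adj x.2 y.2 d0; rewrite ey.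
    + by move=> r wr; have [_ h1] := walk_lb wr; rewrite size_map size_rev size_iota; lia.
    + by apply/allP => v /mem_rseg [k hk ->]; apply: notin_X0; rewrite lev_fv; lia.
  +
    have cne : x.2 != y.2.
      by apply: contra nxy => /eqP E; apply/eqP/vertex_eq; rewrite ?xd ?yd.
    have [m [hm1 hm2]] := exists_lo cne.
    have md : m < d := ltn_ord m.
    set w := mixf x.2 z0 m.
    have E1 : mixf x.2 w m = mixf y.2 w m.
      apply/ffunP=> j; rewrite !mixfE; case: (ltnP j m) => h //; exact: hm2.
    apply: (vis_of (q := map (fv x.2 w) (rev (iota m (d - m))) ++ map (fv y.2 w) (iota m.+1 (d - m.+1)))).
    + have ex : fv x.2 w d = x by apply: fv_hi => // j; rewrite leqNgt ltn_ord.
      have ey : fv y.2 w d = y by apply: fv_hi => // j; rewrite leqNgt ltn_ord.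
      have [p1 l1] := down_seg x.2 w (i := m) (n := d - m) ltac:(lia).
      have [p2 l2] := up_seg y.2 w (i := m) (n := d - m.+1) ltac:(lia).
      rewrite (_ : m + (d - m) = d) in p1 l1; last by lia.
      rewrite ex in p1 l1; rewrite rcons_cat cat_path p1 l1 /= rcons_path.
      rewrite /fv E1 -/(fv y.2 w m) p2 l2 /= (_ : m + (d - m.+1) = d.-1); last by lia.
      by have h := fv_adj y.2 w (k := d.-1) ltac:(lia); rewrite prednK // ey in h.
    + move=> r wr; have [[w' w'in lw'] _] := walk_bit wr hm1.
      have := walk_via wr w'in; rewrite size_cat !size_map size_rev !size_iota; lia.
    + apply/allP => v; rewrite mem_cat => /orP[/mem_rseg [k hk ->]|/mem_seg [k hk ->]].
        case: (posnP k) => k0; last by apply: notin_X0; rewrite lev_fv; lia.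
        have -> : fv x.2 w k = v0.
          rewrite /v0 /fv k0; congr mkv; apply/ffunP=> j; rewrite !mixfE /=.
          by have -> : (j < m) = false by apply/negbTE; rewrite -leqNgt; lia.
        have dn : (0 == d) = false by apply/eqP; lia.
        by rewrite inE lev_v0 !eqxx /= dn ?andbF.
      by apply: notin_X0; rewrite lev_fv; lia.
Qed.


Lemma card_level k : k <= d -> #|[set v : V | lev v == k]| = 2 ^ d.
Proof.
move=> kd.
have -> : [set v : V | lev v == k] = [set mkv k c | c in [set: B]].
  apply/setP=> v; rewrite inE; apply/eqP/imsetP => [<-|[c _ ->]]; last exact: lev_mkv.
  by exists v.2; rewrite ?inE // mkv_lev.
rewrite card_imset ?cardsT ?card_ffun ?card_bool ?card_ord //.
by move=> c c' /(congr1 snd).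
Qed.

Lemma card_X0 : 0 < d -> #|X0| = 2 ^ d.+1 - 2.
Proof.
move=> d0.
set L0 := [set v : V | lev v == 0]; set Ld := [set v : V | lev v == d].
have -> : X0 = (L0 :\ v0) :|: (Ld :\ vd).
  by apply/setP=> v; rewrite !inE; case: (v != v0); case: (v != vd); rewrite ?andbF ?andbT.
have hI : (L0 :\ v0) :&: (Ld :\ vd) = set0.
  apply/setP=> v; rewrite !inE; apply/negP => /andP[/andP[_ /eqP a] /andP[_ /eqP b]].
  by move: d0; rewrite -b a.
have c0 := cardsD1 v0 L0; have cd := cardsD1 vd Ld.
rewrite /L0 /Ld !card_level // !inE lev_v0 lev_vd !eqxx in c0 cd.
rewrite -/L0 -/Ld in c0 cd.
have h2 : 0 < 2 ^ d by rewrite expn_gt0.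
rewrite cardsU hI cards0 expnS; lia.
Qed.


End BF.

From Stdlib Require Import Classical.
Set Implicit Arguments. Unset Strict Implicit. Unset Printing Implicit Defensive.

Section BF2.
Variable d : nat.
Local Notation V := (bf_vertex d).
Local Notation B := {ffun 'I_d -> bool}.
Local Notation adj := (bf_adj d).

Lemma up_walk (x y : V) : lev x <= lev y ->
  (forall j : 'I_d, j < lev x -> y.2 j = x.2 j) ->
  (forall j : 'I_d, lev y <= j -> y.2 j = x.2 j) ->
  exists q, walk adj x y q /\ size q = lev y - lev x.
Proof.
move=> h h1 h2; exists (map (fv y.2 x.2) (iota (lev x).+1 (lev y - lev x))).
have [p l] := up_seg y.2 x.2 (i := lev x) (n := lev y - lev x) ltac:(have := lev_le y; lia).
have ex : fv y.2 x.2 (lev x) = x by apply: fv_lo.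
have ey : fv y.2 x.2 (lev y) = y by apply: fv_hi.
rewrite ex (_ : lev x + (lev y - lev x) = lev y) ?ey in p l; last by lia.
by rewrite /walk p l eqxx size_map size_iota.
Qed.

Lemma down_walk (x y : V) : lev y <= lev x ->
  (forall j : 'I_d, j < lev y -> x.2 j = y.2 j) ->
  (forall j : 'I_d, lev x <= j -> x.2 j = y.2 j) ->
  exists q, walk adj x y q /\ size q = lev x - lev y.
Proof.
move=> h h1 h2; exists (map (fv x.2 y.2) (rev (iota (lev y) (lev x - lev y)))).
have [p l] := down_seg x.2 y.2 (i := lev y) (n := lev x - lev y) ltac:(have := lev_le x; lia).
have ey : fv x.2 y.2 (lev y) = y by apply: fv_lo.
have ex : fv x.2 y.2 (lev x) = x by apply: fv_hi.
rewrite ey (_ : lev y + (lev x - lev y) = lev x) ?ex in p l; last by lia.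
by rewrite /walk p l eqxx size_map size_rev size_iota.
Qed.

Section Upper.
Variable X : {set V}.
Hypothesis MV : mutual_visibility_set adj X.

Lemma R12 (x y z : V) : lev x < lev z < lev y ->
  (forall j : 'I_d, j < lev x -> y.2 j = x.2 j) ->
  (forall j : 'I_d, lev y <= j -> y.2 j = x.2 j) ->
  z.2 = mixf y.2 x.2 (lev z) -> z \in X -> ~ Xvisible adj X x y.
Proof.
move=> hl h1 h2 hz zX.
have [q [wq sq]] := up_walk (x := x) (y := y) ltac:(lia) h1 h2.
apply: (not_visible wq) => p wp sp.
have [lb1 lb2] := walk_lb wp.
have [_ _ T] := walk_tight_up wp ltac:(lia).
have [w win lw] := walk_ivt (k := lev z) wp ltac:(apply/orP; left; lia).
have [_ E] := T w win.
have wz : w = z by apply: vertex_eq; rewrite // E hz lw.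
exists z; first by rewrite -wz.
by split=> //; apply/eqP => E'; rewrite E' in hl; lia.
Qed.

Lemma R3 (x y z : V) : lev x < lev z <= lev y -> lev y < d ->
  x.2 = flipn y.2 (lev y) -> z.2 = x.2 -> z \in X -> ~ Xvisible adj X x y.
Proof.
move=> hl yd hx hz zX.
set o := Ordinal yd.
have [q1 [wq1 sq1]] := up_walk (x := x) (y := mkv (lev y).+1 x.2) ltac:(rewrite lev_mkv; lia)
  (fun _ _ => erefl) (fun _ _ => erefl).
have a1 : adj (mkv (lev y).+1 x.2) y.
  by rewrite adjE lev_mkv // eqxx hx eqxx !orbT.
have wq : walk adj x y (q1 ++ [:: y]).
  by rewrite walk_cat (walk_last wq1) wq1 walk_cons a1 walk_nil eqxx.
apply: (not_visible wq) => p wp sp.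
rewrite size_cat sq1 lev_mkv // (_ : size [:: y] = 1) // in sp.
have bo : x.2 o != y.2 o by rewrite hx flipnE eqxx; case: (y.2 o).
have [_ [w win lw]] := walk_bit wp bo.
have [p1 [p2 [Ep wp1 wp2]]] := walk_split wp win.
have [a b] := walk_lb wp1; have [a' b'] := walk_lb wp2.
rewrite Ep size_cat in sp.
have lw' : lev w = (lev y).+1 by rewrite lw.
have [_ _ T] := walk_tight_up wp1 ltac:(clear -a b' sp lw' hl; lia).
have s2 : size p2 = 1 by clear -a b' sp lw' hl; lia.
case: p2 wp2 s2 a' b' sp Ep => [|y0 [|]] // wp2 _ _ _ _ Ep.
move: wp2; rewrite walk_cons walk_nil => /andP[awy /eqP y0y]; subst y0.
have [v vin lv] := walk_ivt (k := lev z) wp1 ltac:(apply/orP; left; clear -hl lw'; lia).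
have [_ E] := T v vin.
have vz : v = z.
  apply: vertex_eq => //; rewrite E hz lv; apply/ffunP => j; rewrite mixfE.
  case: ifP => // hj.
  rewrite (adj_bits awy) ?hx ?flipnE; last by apply/eqP => E0; clear -E0 hj lv lw' hl; lia.
  by rewrite (_ : (nat_of_ord j == lev y) = false) //; apply/eqP => E0; clear -E0 hj lv hl; lia.
exists z; first by rewrite -vz Ep -cat_cons mem_cat vin.
split=> //; apply/eqP => E'.
  by move: hl; rewrite E'; clear; lia.
have : z.2 o = y.2 o by rewrite E'.
by rewrite hz hx flipnE eqxx; case: (y.2 o).
Qed.


Lemma flipnK (c : B) k : flipn (flipn c k) k = c.
Proof. by apply/ffunP=> j; rewrite !flipnE; case: (nat_of_ord j == k) => //; rewrite negbK. Qed.

Lemma R3d (x y z : V) : 0 < lev y -> lev y <= lev z < lev x ->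
  x.2 = flipn y.2 (lev y).-1 -> z.2 = x.2 -> z \in X -> ~ Xvisible adj X x y.
Proof.
move=> y0 hl hx hz zX.
have md : (lev y).-1 < d by have := lev_le y; clear -y0; lia.
set o := Ordinal md.
have [q1 [wq1 sq1]] := down_walk (x := x) (y := mkv (lev y).-1 x.2)
  ltac:(rewrite lev_mkv; [clear -hl; lia | clear -md; lia]) (fun _ _ => erefl) (fun _ _ => erefl).
have a1 : adj (mkv (lev y).-1 x.2) y.
  rewrite adjE lev_mkv; last by clear -md; lia.
  by rewrite prednK // eqxx /= hx flipnK eqxx orbT.
have wq : walk adj x y (q1 ++ [:: y]).
  by rewrite walk_cat (walk_last wq1) wq1 walk_cons a1 walk_nil eqxx.
apply: (not_visible wq) => p wp sp.
rewrite size_cat sq1 lev_mkv in sp; last by clear -md; lia.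
rewrite (_ : size [:: y] = 1) // in sp.
have bo : x.2 o != y.2 o by rewrite hx flipnE eqxx; case: (y.2 o).
have [[w win lw] _] := walk_bit wp bo.
have [p1 [p2 [Ep wp1 wp2]]] := walk_split wp win.
have [a b] := walk_lb wp1; have [a' b'] := walk_lb wp2.
rewrite Ep size_cat in sp.
have lw' : (lev w).+1 = lev y by rewrite lw prednK.
have [_ _ T] := walk_tight_down wp1 ltac:(clear -b a' sp lw' hl; lia).
have s2 : size p2 = 1 by clear -b a' sp lw' hl; lia.
case: p2 wp2 s2 a' b' sp Ep => [|y0' [|]] // wp2 _ _ _ _ Ep.
move: wp2; rewrite walk_cons walk_nil => /andP[awy /eqP y0y]; subst y0'.
have [v vin lv] := walk_ivt (k := lev z) wp1 ltac:(apply/orP; right; clear -hl lw'; lia).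
have [_ E] := T v vin.
have vz : v = z.
  apply: vertex_eq => //; rewrite E hz lv; apply/ffunP => j; rewrite mixfE.
  case: ifP => // /negbT; rewrite -leqNgt => hj.
  rewrite (adj_bits awy) ?hx ?flipnE; last by apply/eqP => E0; clear -E0 hj lv lw' hl; lia.
  by rewrite (_ : (nat_of_ord j == (lev y).-1) = false) //; apply/eqP => E0; clear -E0 hj lv hl lw'; lia.
exists z; first by rewrite -vz Ep -cat_cons mem_cat vin.
split=> //; apply/eqP => E'.
  by move: hl; rewrite E'; clear; lia.
have : z.2 o = y.2 o by rewrite E'.
by rewrite hz hx flipnE eqxx; case: (y.2 o).
Qed.

Lemma R5 (x y : V) (m : 'I_d) k : x.2 m != y.2 m -> (k = nat_of_ord m \/ k = m.+1) ->
  (forall v : V, lev v = k -> v \in X) -> lev x != k -> lev y != k -> ~ Xvisible adj X x y.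
Proof.
move=> hb hk hX hx hy [p [[wp _] allp]].
have [[w1 i1 l1] [w2 i2 l2]] := walk_bit wp hb.
have [w win lw] : exists2 w, w \in x :: p & lev w = k.
  by case: hk => ->; [exists w1|exists w2].
have wx : w != x by apply: contraNneq hx => <-; rewrite lw.
have wy : w != y by apply: contraNneq hy => <-; rewrite lw.
have := allP allp w (internal_mem wp win wx wy).
by rewrite hX.
Qed.


Definition upc (u v : V) := lev u < lev v /\ forall j : 'I_d, (j < lev u \/ lev v <= j) -> v.2 j = u.2 j.
Definition downc (u v : V) := lev v < lev u /\ forall j : 'I_d, (j < lev v \/ lev u <= j) -> v.2 j = u.2 j.
Definition uptype (u : V) := forall v, v \in X -> ~ upc u v.
Definition downtype (u : V) := forall v, v \in X -> ~ downc u v.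

Lemma LemC (u : V) : u \in X -> uptype u \/ downtype u.
Proof.
move=> uX.
case: (classic (exists v, v \in X /\ upc u v)) => [[v [vX [hv1 hv2]]]|H]; last first.
  by left=> v vX hv; apply: H; exists v.
case: (classic (exists w, w \in X /\ downc u w)) => [[w [wX [hw1 hw2]]]|H]; last first.
  by right=> w wX hw; apply: H; exists w.
exfalso.
have wv : w != v by apply/eqP => E; move: hv1 hw1; rewrite E; clear; lia.
apply: (@R12 w v u) (MV wX vX wv) => //.
- by clear -hv1 hw1; lia.
- by move=> j hj; rewrite hv2 ?hw2 //; [left|left]; clear -hj hw1; lia.
- by move=> j hj; rewrite hv2 ?hw2 //; [right|right]; clear -hj hv1; lia.
- apply/ffunP=> j; rewrite mixfE; case: ifP => hj.
    by rewrite hv2 //; left.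
  by rewrite hw2 //; right; move/negbT: hj; rewrite -leqNgt.
Qed.

Definition line (c : B) : {set V} := [set v : V | v.2 == c].
Definition s (c : B) := #|X :&: line c|.

Lemma vert_neq_lev (a b : V) : a.2 = b.2 -> a != b -> lev a != lev b.
Proof. by move=> e ne; apply: contra ne => /eqP l; apply/eqP/vertex_eq. Qed.

Lemma line_ge1 c : 0 < s c -> exists2 a, a \in X & a.2 = c.
Proof.
rewrite /s card_gt0 => /set0Pn [a]; rewrite !inE => /andP[aX /eqP ac].
by exists a.
Qed.

Lemma line_ge2 c : 1 < s c ->
  exists a b, [/\ a \in X, b \in X, a.2 = c, b.2 = c & lev a < lev b].
Proof.
rewrite /s => /card_gt1P [a [b [ha hb ne]]]; move: ha hb; rewrite !inE.
move=> /andP[aX /eqP ac] /andP[bX /eqP bc].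
have := vert_neq_lev (etrans ac (esym bc)) ne.
case: (ltngtP (lev a) (lev b)) => // h _.
  by exists a, b.
by exists b, a.
Qed.

Lemma line_le1 c :
  (forall a b, a \in X -> b \in X -> a.2 = c -> b.2 = c -> lev a < lev b -> False) -> s c <= 1.
Proof.
move=> H; rewrite leqNgt; apply/negP => /line_ge2 [a [b [aX bX ac bc lab]]].
exact: H aX bX ac bc lab.
Qed.

Lemma line_le2 c : s c <= 2.
Proof.
rewrite leqNgt; apply/negP; rewrite /s => /card_gt2P [a [b [e [[ha hb he] [n1 n2 n3]]]]].
move: ha hb he; rewrite !inE => /andP[aX /eqP ac] /andP[bX /eqP bc] /andP[eX /eqP ec].
have l1 := vert_neq_lev (etrans ac (esym bc)) n1.
have l2 := vert_neq_lev (etrans bc (esym ec)) n2.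
have l3 := vert_neq_lev (etrans ec (esym ac)) n3.
have key : forall x y z : V, x \in X -> y \in X -> z \in X -> x.2 = c -> y.2 = c -> z.2 = c ->
    lev x < lev z < lev y -> False.
  move=> x y z xX yX zX xc yc zc h.
  have xy : x != y by apply/eqP => E; move: h; rewrite E; clear; lia.
  apply: (@R12 x y z) (MV xX yX xy) => //.
  - by move=> j _; rewrite xc yc.
  - by move=> j _; rewrite xc yc.
  - by rewrite zc xc yc mixf_same.
move: l1 l2 l3.
case: (ltngtP (lev a) (lev b)) => // hab _;
case: (ltngtP (lev b) (lev e)) => // hbe _;
case: (ltngtP (lev e) (lev a)) => // hea _.
all: first [ by clear -hab hbe hea; lia
           | by apply: (key a e b) => //; clear -hab hbe hea; lia
           | by apply: (key e b a) => //; clear -hab hbe hea; lia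
           | by apply: (key a b e) => //; clear -hab hbe hea; lia
           | by apply: (key b a e) => //; clear -hab hbe hea; lia
           | by apply: (key e a b) => //; clear -hab hbe hea; lia
           | by apply: (key b e a) => //; clear -hab hbe hea; lia ].
Qed.

Lemma flipn_neq (c : B) k : k < d -> flipn c k != c.
Proof.
move=> kd; apply/eqP => /ffunP /(_ (Ordinal kd)); rewrite flipnE eqxx.
by case: (c _).
Qed.

Lemma LemU (u : V) : u \in X -> lev u < d -> uptype u -> s (flipn u.2 (lev u)) <= 1.
Proof.
move=> uX ud ut; apply: line_le1 => a b aX bX ac bc lab.
case: (ltnP (lev u) (lev b)) => hub.
  apply: (ut b bX); split=> // j hj; rewrite bc flipnE.
  by rewrite (_ : (nat_of_ord j == lev u) = false) //; apply/eqP => E; case: hj; clear -E hub; lia.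
have au : a != u by apply/eqP => E; move: lab hub; rewrite E; clear; lia.
apply: (@R3 a u b) (MV aX uX au) => //.
- by clear -lab hub; lia.
- by rewrite bc ac.
Qed.

Lemma LemD (u : V) : u \in X -> 0 < lev u -> downtype u -> s (flipn u.2 (lev u).-1) <= 1.
Proof.
move=> uX u0 ut; apply: line_le1 => a b aX bX ac bc lab.
case: (ltnP (lev a) (lev u)) => hau.
  apply: (ut a aX); split=> // j hj; rewrite ac flipnE.
  by rewrite (_ : (nat_of_ord j == (lev u).-1) = false) //; apply/eqP => E; case: hj; clear -E hau u0; lia.
have bu : b != u by apply/eqP => E; move: lab hau; rewrite E; clear; lia.
apply: (@R3d b u a) (MV bX uX bu) => //.
all: first [by clear -lab hau; lia | by rewrite bc ac | by rewrite bc].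
Qed.


Lemma flipn_ne (c : B) k (j : 'I_d) : nat_of_ord j != k -> flipn c k j = c j.
Proof. by rewrite flipnE => /negbTE ->. Qed.

Lemma flipn_eq (c : B) k (j : 'I_d) : nat_of_ord j = k -> flipn c k j = ~~ c j.
Proof. by rewrite flipnE => ->; rewrite eqxx. Qed.

Lemma deficit : 1 < d ->
  (exists c, s c = 0) \/ (exists c1 c2, c1 != c2 /\ s c1 <= 1 /\ s c2 <= 1).
Proof.
move=> d1; apply: NNPP => Hn.
have H1 : forall c, 0 < s c.
  by move=> c; rewrite lt0n; apply/eqP => E; apply: Hn; left; exists c.
have H2 : forall c1 c2, s c1 <= 1 -> s c2 <= 1 -> c1 = c2.
  move=> c1 c2 h1 h2; apply/eqP; apply: NNPP => ne; apply: Hn; right.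
  by exists c1, c2; split=> //; apply/negP.
have H3 : forall c e, s e <= 1 -> c != e -> 1 < s c.
  move=> c e he ne; rewrite ltnNge; apply/negP => hc.
  by move/eqP: ne; apply; apply: H2.
have d0 : 0 < d by clear -d1; lia.
set o0 := Ordinal d0.
set o1 := Ordinal d1.
have dd : d.-1 < d by clear -d0; lia.
set od := Ordinal dd.
case: (classic (exists u, u \in X /\ 0 < lev u < d)) => [[u [uX hu]]|Hno].
- have [e he] : exists e, s e <= 1.
    case: (LemC uX) => ht.
      by exists (flipn u.2 (lev u)); apply: LemU => //; clear -hu; lia.
    by exists (flipn u.2 (lev u).-1); apply: LemD => //; clear -hu; lia.
  have [t tX te] := line_ge1 (H1 e).
  have tlev : lev t = 0 \/ lev t = d.
    apply: NNPP => ht.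
    have ht' : 0 < lev t < d by have := lev_le t; clear -ht; lia.
    case: (LemC tX) => tt.
      have := LemU tX ltac:(clear -ht'; lia) tt => /H2 /(_ he); rewrite te => E.
      by move: (flipn_neq e (k := lev t) ltac:(clear -ht'; lia)); rewrite E eqxx.
    have := LemD tX ltac:(clear -ht'; lia) tt => /H2 /(_ he); rewrite te => E.
    by move: (flipn_neq e (k := (lev t).-1) ltac:(clear -ht'; lia)); rewrite E eqxx.
  case: tlev => tl.
  +
    have noDown : forall u', u' \in X -> 0 < lev u' -> lev u' < d -> ~ downtype u'.
      move=> u' u'X h1 h2 dt.
      have E := H2 _ _ (LemD u'X h1 dt) he.
      apply: (dt t tX); split; first by rewrite tl.
      move=> j [hj|hj]; first by move: hj; rewrite tl.
      by rewrite te -E flipn_ne //; apply/eqP => E'; clear -E' hj h1; lia.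
    have L0X : forall v : V, lev v = 0 -> v \in X.
      move=> v lv; case: (eqVneq v.2 e) => ve.
        by have -> : v = t by apply: vertex_eq; rewrite ?lv ?tl ?ve ?te.
      have [a [b [aX bX ac bc lab]]] := line_ge2 (H3 _ _ he ve).
      case: (posnP (lev a)) => a0.
        by have -> : v = a by apply: vertex_eq; rewrite ?lv ?a0 ?ac.
      exfalso; have bd := lev_le b.
      case: (LemC aX) => [ut|dt].
        by apply: (ut b bX); split=> // j _; rewrite bc ac.
      by apply: (noDown a aX a0 _ dt); clear -lab bd; lia.
    have ut : uptype u.
      case: (LemC uX) => // dt; exfalso; apply: (noDown u uX _ _ dt); clear -hu; lia.
    have Eu := H2 _ _ (LemU uX ltac:(clear -hu; lia) ut) he.
    have ne : flipn e 0 != e by apply: flipn_neq.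
    have [a [b [aX bX ac bc lab]]] := line_ge2 (H3 _ _ he ne).
    have bits : u.2 o0 != b.2 o0.
      rewrite bc flipn_eq // -Eu flipn_ne; first by case: (u.2 o0).
      by apply/eqP => E'; clear -E' hu; simpl in E'; lia.
    have ub : u != b by apply: contraNneq bits => ->.
    apply: (@R5 u b o0 0) (MV uX bX ub) => //; first by left.
      by apply/eqP => E'; clear -E' hu; lia.
    by apply/eqP => E'; clear -E' lab; lia.
  +
    have noUp : forall u', u' \in X -> 0 < lev u' -> lev u' < d -> ~ uptype u'.
      move=> u' u'X h1 h2 ut.
      have E := H2 _ _ (LemU u'X h2 ut) he.
      apply: (ut t tX); split; first by rewrite tl.
      move=> j [hj|hj]; last by move: hj; rewrite tl leqNgt ltn_ord.
      by rewrite te -E flipn_ne //; apply/eqP => E'; clear -E' hj; lia.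
    have LdX : forall v : V, lev v = d -> v \in X.
      move=> v lv; case: (eqVneq v.2 e) => ve.
        by have -> : v = t by apply: vertex_eq; rewrite ?lv ?tl ?ve ?te.
      have [a [b [aX bX ac bc lab]]] := line_ge2 (H3 _ _ he ve).
      have bd := lev_le b.
      case: (eqVneq (lev b) d) => b0.
        by have -> : v = b by apply: vertex_eq; rewrite ?lv ?b0 ?bc.
      exfalso.
      case: (LemC bX) => [ut|dt].
        by apply: (noUp b bX _ _ ut); move/eqP: b0; clear -lab bd; lia.
      by apply: (dt a aX); split=> // j _; rewrite bc ac.
    have dt : downtype u.
      case: (LemC uX) => // ut; exfalso; apply: (noUp u uX _ _ ut); clear -hu; lia.
    have Eu := H2 _ _ (LemD uX ltac:(clear -hu; lia) dt) he.
    have ne : flipn e d.-1 != e by apply: flipn_neq.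
    have [a [b [aX bX ac bc lab]]] := line_ge2 (H3 _ _ he ne).
    have bits : u.2 od != a.2 od.
      rewrite ac flipn_eq // -Eu flipn_ne; first by case: (u.2 od).
      by apply/eqP => E'; clear -E' hu; simpl in E'; lia.
    have ua : u != a by apply: contraNneq bits => ->.
    have bd := lev_le b.
    apply: (@R5 u a od d) (MV uX aX ua) => //.
    * by right; rewrite /= prednK.
    * by apply/eqP => E'; clear -E' hu; lia.
    * by apply/eqP => E'; clear -E' lab bd; lia.
-
  have ends : forall v, v \in X -> lev v = 0 \/ lev v = d.
    move=> v vX; apply: NNPP => hv; apply: Hno; exists v; split=> //.
    by have := lev_le v; clear -hv; lia.
  have Ends : forall c (v : V), 1 < s c -> v.2 = c -> lev v = 0 \/ lev v = d -> v \in X.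
    move=> c v hc vc hv.
    have [a [b [aX bX ac bc lab]]] := line_ge2 hc.
    have bd := lev_le b.
    case: (ends a aX) => la; last by exfalso; clear -la lab bd; lia.
    case: (ends b bX) => lb; first by exfalso; clear -la lb lab; lia.
    case: hv => lv.
      by have -> : v = a by apply: vertex_eq; rewrite ?lv ?la ?vc ?ac.
    by have -> : v = b by apply: vertex_eq; rewrite ?lv ?lb ?vc ?bc.
  have lmd : forall c : B, lev (mkv d c) = d by move=> c; apply: lev_mkv.
  have lm0 : forall c : B, lev (mkv 0 c) = 0 by move=> c; apply: lev_mkv.
  case: (classic (exists e, s e <= 1)) => [[e he]|Hall].
  + have [t tX te] := line_ge1 (H1 e).
    case: (ends t tX) => tl.
    * have L0X : forall v : V, lev v = 0 -> v \in X.
        move=> v lv; case: (eqVneq v.2 e) => ve.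
          by have -> : v = t by apply: vertex_eq; rewrite ?lv ?tl ?ve ?te.
        by apply: (Ends _ _ (H3 _ _ he ve) erefl); left.
      set c := flipn e 1.
      have ne1 : c != e by apply: flipn_neq.
      have ne2 : flipn c 0 != e.
        apply/eqP => /ffunP /(_ o1); rewrite flipn_ne // flipn_eq //.
        by case: (e o1).
      have xX : mkv d c \in X by apply: (Ends _ (mkv d c) (H3 _ _ he ne1) erefl); right.
      have yX : mkv d (flipn c 0) \in X by apply: (Ends _ (mkv d (flipn c 0)) (H3 _ _ he ne2) erefl); right.
      have bits : (mkv d c).2 o0 != (mkv d (flipn c 0)).2 o0.
        by rewrite /= flipn_eq //; case: (c o0).
      have xy : mkv d c != mkv d (flipn c 0) by apply: contraNneq bits => ->.
      apply: (@R5 _ _ o0 0) (MV xX yX xy) => //; first by left.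
        by rewrite lmd; apply/eqP => E'; clear -E' d0; lia.
      by rewrite lmd; apply/eqP => E'; clear -E' d0; lia.
    * have LdX : forall v : V, lev v = d -> v \in X.
        move=> v lv; case: (eqVneq v.2 e) => ve.
          by have -> : v = t by apply: vertex_eq; rewrite ?lv ?tl ?ve ?te.
        by apply: (Ends _ _ (H3 _ _ he ve) erefl); right.
      set c := flipn e 0.
      have ne1 : c != e by apply: flipn_neq.
      have ne2 : flipn c d.-1 != e.
        apply/eqP => /ffunP /(_ o0); rewrite flipn_ne; last by apply/eqP => /= E'; clear -E' d1; lia.
        by rewrite flipn_eq //; case: (e o0).
      have xX : mkv 0 c \in X by apply: (Ends _ (mkv 0 c) (H3 _ _ he ne1) erefl); left.
      have yX : mkv 0 (flipn c d.-1) \in X by apply: (Ends _ (mkv 0 (flipn c d.-1)) (H3 _ _ he ne2) erefl); left.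
      have bits : (mkv 0 c).2 od != (mkv 0 (flipn c d.-1)).2 od.
        by rewrite /= flipn_eq //; case: (c od).
      have xy : mkv 0 c != mkv 0 (flipn c d.-1) by apply: contraNneq bits => ->.
      apply: (@R5 _ _ od d) (MV xX yX xy) => //.
      -- by right; rewrite /= prednK.
      -- by rewrite lm0; apply/eqP => E'; clear -E' d0; lia.
      -- by rewrite lm0; apply/eqP => E'; clear -E' d0; lia.
  + have H4 : forall c, 1 < s c.
      by move=> c; rewrite ltnNge; apply/negP => h; apply: Hall; exists c.
    have L0X : forall v : V, lev v = 0 -> v \in X.
      by move=> v lv; apply: (Ends _ _ (H4 v.2) erefl); left.
    have xX : mkv d (z0 d) \in X by apply: (Ends _ (mkv d (z0 d)) (H4 (z0 d)) erefl); right.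
    have yX : mkv d (flipn (z0 d) 0) \in X by apply: (Ends _ (mkv d (flipn (z0 d) 0)) (H4 _) erefl); right.
    have bits : (mkv d (z0 d)).2 o0 != (mkv d (flipn (z0 d) 0)).2 o0.
      by rewrite /= flipn_eq //; case: ((z0 d) o0).
    have xy : mkv d (z0 d) != mkv d (flipn (z0 d) 0) by apply: contraNneq bits => ->.
    apply: (@R5 _ _ o0 0) (MV xX yX xy) => //; first by left.
      by rewrite lmd; apply/eqP => E'; clear -E' d0; lia.
    by rewrite lmd; apply/eqP => E'; clear -E' d0; lia.
Qed.


Lemma card_sum : #|X| = \sum_(c : B) s c.
Proof.
rewrite -sum1_card (partition_big (fun v : V => v.2) predT) //.
apply: eq_bigr => c _; rewrite /s -sum1_card; apply: eq_bigl => v; rewrite !inE.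
by [].
Qed.

Lemma upper : 1 < d -> #|X| <= 2 ^ d.+1 - 2.
Proof.
move=> d1; rewrite card_sum.
have E : \sum_(c : B) (s c + (2 - s c)) = \sum_(c : B) 2.
  by apply: eq_bigr => c _; rewrite subnKC // line_le2.
rewrite big_split /= sum_nat_const card_ffun card_bool card_ord in E.
have D : 2 <= \sum_(c : B) (2 - s c).
  case: (deficit d1) => [[c hc]|[c1 [c2 [ne [h1 h2]]]]].
    by rewrite (bigD1 c) //= hc subn0 leq_addr.
  rewrite (bigD1 c1) //= (bigD1 c2) /=; last by rewrite eq_sym.
  move: h1 h2; set R := \sum_(i | _) _; clear; lia.
have h : 2 ^ d.+1 = 2 ^ d * 2 by rewrite expnS mulnC.
rewrite h; move: E D; set S1 := \sum_(c : B) s c; set S2 := \sum_(c : B) (2 - s c).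
clear; lia.
Qed.

End Upper.

End BF2.

Theorem theorem5p4 (d : nat) (hd : 2 <= d) :
  is_mu (bf_adj d) (2 ^ d.+1 - 2).
Proof.
split.
- exists (X0 d); split; [apply: X0_mv | apply: card_X0]; by apply: leq_trans hd.
- by move=> X HX; exact: (upper HX hd).
Qed.
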